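(* Let $f:\mathbb{N}\to[0,\infty)$ be weakly super-multiplicative with normal order $g:(0,\infty)\to(0,\infty)$, where $g$ is either non-decreasing or $\log$-uniformly continuous. Then the limit $\lim_{y\to\infty}\frac{\log g(y)}{\log y}$ (over real $y$) exists in $\mathbb{R}\cup\{\infty\}$ and equals $\sup_{n\ge2}\frac{\log f(n)}{\log n}$ (with the convention $\log 0=-\infty$).
   Context: A function $f:\mathbb{N}\to[0,\infty)$ is weakly super-multiplicative if for all $n\in\mathbb{N}$ and all $\epsilon>0$ there exist $x_0>0$ and $\delta>0$ such that for all real $x>x_0$, $\#\{m\in\mathbb{N}\cap[x,(1+\epsilon)x]: f(nm)\ge(1-\epsilon)f(n)f(m)\}\ge\delta x$. A function $f:\mathbb{N}\to[0,\infty)$ has normal order $g$ if for every $\epsilon>0$ the set $\{n\in\mathbb{N}: |f(n)-g(n)|\ge\epsilon g(n)\}$ has upper (natural) density $0$. A function $g:(0,\infty)\to(0,\infty)$ is $\log$-uniformly continuous if for every $\epsilon>0$ there is $\delta>0$ such that for all $x,y>0$ with $|x/y-1|<\delta$ we have $|g(x)/g(y)-1|<\epsilon$. *)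

(* Defs.v *)
From Stdlib Require Import Reals Lra Lia ClassicalEpsilon.
Open Scope R_scope.

Fixpoint count_le (P : nat -> Prop) (N : nat) : nat :=
  match N with
  | O => if excluded_middle_informative (P O) then 1%nat else 0%nat
  | S k => (count_le P k + if excluded_middle_informative (P (S k)) then 1 else 0)%nat
  end.

(* #{ m in N ∩ [a,b] | P m }, for b >= 0 (all such m are <= up b) *)
Definition count_interval (a b : R) (P : nat -> Prop) : nat :=
  count_le (fun m => a <= INR m <= b /\ P m) (Z.to_nat (up b)).

Definition weakly_supermult (f : nat -> R) : Prop :=
  forall n : nat, (1 <= n)%nat -> forall eps : R, 0 < eps ->
  exists x0 delta : R, 0 < x0 /\ 0 < delta /\
    forall x : R, x > x0 ->
      INR (count_interval x ((1 + eps) * x)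
             (fun m => (1 <= m)%nat /\ f (n * m)%nat >= (1 - eps) * f n * f m))
      >= delta * x.

Definition upper_density_zero (A : nat -> Prop) : Prop :=
  forall eta : R, 0 < eta -> exists N0 : nat, forall N : nat, (N >= N0)%nat ->
    INR (count_le (fun n => (1 <= n)%nat /\ A n) N) <= eta * INR N.

Definition normal_order (f : nat -> R) (g : R -> R) : Prop :=
  forall eps : R, 0 < eps ->
    upper_density_zero (fun n => Rabs (f n - g (INR n)) >= eps * g (INR n)).

Definition nondecreasing_pos (g : R -> R) : Prop :=
  forall x y : R, 0 < x -> x <= y -> g x <= g y.

Definition log_unif_cont (g : R -> R) : Prop :=
  forall eps : R, 0 < eps -> exists delta : R, 0 < delta /\
    forall x y : R, 0 < x -> 0 < y -> Rabs (x / y - 1) < delta ->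
      Rabs (g x / g y - 1) < eps.

(* The values log f(n)/log n, n >= 2, with log 0 = -infinity: terms with
   f n = 0 equal -infinity and are omitted (they never affect the sup
   unless all terms are -infinity, in which case the set is empty). *)
Definition ratio_set (f : nat -> R) (r : R) : Prop :=
  exists n : nat, (2 <= n)%nat /\ 0 < f n /\ r = ln (f n) / ln (INR n).

Definition tends_to_at_infty (h : R -> R) (L : R) : Prop :=
  forall e : R, 0 < e -> exists Y : R, forall y : R, y > Y -> Rabs (h y - L) < e.

Definition tends_to_infty (h : R -> R) : Prop :=
  forall M : R, exists Y : R, forall y : R, y > Y -> h y > M.

(* Main.v *)
Require Import Defs.
From Stdlib Require Import Reals Lra Lia ZArith ClassicalEpsilon Classical.
Open Scope R_scope.

Lemma count_mono (P Q : nat -> Prop) N :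
  (forall m, P m -> Q m) -> (count_le P N <= count_le Q N)%nat.
Proof.
  intros H; induction N as [|N IH]; simpl;
  repeat destruct excluded_middle_informative; try lia;
  exfalso; eauto.
Qed.

Lemma count_or (P Q : nat -> Prop) N :
  (count_le (fun m => P m \/ Q m) N <= count_le P N + count_le Q N)%nat.
Proof.
  induction N as [|N IH]; simpl;
  repeat destruct excluded_middle_informative; try lia;
  exfalso; intuition.
Qed.

Lemma count_step (Q : nat -> Prop) a j :
  (count_le Q a + (if excluded_middle_informative (Q (a + S j)%nat) then 1 else 0)
   <= count_le Q (a + S j))%nat.
Proof.
  induction j as [|j IH].
  - replace (a + 1)%nat with (S a) by lia. simpl. lia.
  - replace (a + S (S j))%nat with (S (a + S j)) by lia. simpl.
    assert (count_le Q a <= count_le Q (a + S j))%nat.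
    { revert IH. destruct excluded_middle_informative; lia. }
    lia.
Qed.

Lemma count_mul (Q : nat -> Prop) n N : (1 <= n)%nat ->
  (count_le (fun m => Q (n * m)%nat) N <= count_le Q (n * N))%nat.
Proof.
  intros Hn. destruct n as [|n']; [lia|].
  induction N as [|N IH].
  - rewrite Nat.mul_0_r. simpl. rewrite Nat.mul_0_r. lia.
  - change (count_le (fun m => Q (S n' * m)%nat) (S N)) with
      (count_le (fun m => Q (S n' * m)%nat) N +
        (if excluded_middle_informative (Q (S n' * S N)%nat) then 1 else 0))%nat.
    pose proof (count_step Q (S n' * N) n') as H.
    replace (S n' * N + S n')%nat with (S n' * S N)%nat in H by lia.
    lia.
Qed.

Lemma up_nat b : 0 < b -> b < INR (Z.to_nat (up b)) <= b + 1.
Proof.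
  intros Hb. destruct (archimed b) as [H1 H2].
  assert (Hp : (0 <= up b)%Z). { apply le_IZR. lra. }
  rewrite INR_IZR_INZ, Z2Nat.id by exact Hp. lra.
Qed.

Lemma L1 (f : nat -> R) (g : R -> R) (hfg : normal_order f g)
  (hwsm : weakly_supermult f) n eps eta' :
  (1 <= n)%nat -> 0 < eps -> 0 < eta' ->
  exists X, 0 < X /\ forall x, x > X -> exists m : nat, (1 <= m)%nat /\
    x <= INR m <= (1 + eps) * x /\
    f (n * m)%nat >= (1 - eps) * f n * f m /\
    Rabs (f m - g (INR m)) < eta' * g (INR m) /\
    Rabs (f (n * m)%nat - g (INR (n * m))) < eta' * g (INR (n * m)).
Proof.
  intros Hn Heps Heta.
  destruct (hwsm n Hn eps Heps) as [x0 [delta [Hx0 [Hd Hc]]]].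
  set (B := fun k => Rabs (f k - g (INR k)) >= eta' * g (INR k)).
  pose proof (hfg eta' Heta) as Hden. fold B in Hden.
  assert (Hn1 : 1 <= INR n) by (replace 1 with (INR 1) by reflexivity; apply le_INR; exact Hn).
  set (eta := delta / (2 * (1 + INR n) * (2 + eps))).
  assert (Heta2 : eta * (1 + INR n) * (2 + eps) = delta / 2).
  { unfold eta. field. lra. }
  assert (Hetap : 0 < eta).
  { unfold eta. apply Rdiv_lt_0_compat; [lra|]. apply Rmult_lt_0_compat; lra. }
  destruct (Hden eta Hetap) as [N0 HN0].
  exists (Rmax x0 (Rmax 1 (INR N0))). split.
  { apply Rlt_le_trans with x0; [lra| apply Rmax_l]. }
  intros x Hx.
  assert (Hxx0 : x > x0) by (eapply Rle_lt_trans; [apply Rmax_l|exact Hx]).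
  assert (Hx1 : x > 1) by (eapply Rle_lt_trans; [|exact Hx];
     eapply Rle_trans; [|apply Rmax_r]; apply Rmax_l).
  assert (HxN0 : x > INR N0) by (eapply Rle_lt_trans; [|exact Hx];
     eapply Rle_trans; [|apply Rmax_r]; apply Rmax_r).
  apply NNPP; intro Hno.
  specialize (Hc x Hxx0). unfold count_interval in Hc.
  set (N := Z.to_nat (up ((1 + eps) * x))) in Hc.
  assert (HN : (1 + eps) * x < INR N <= (1 + eps) * x + 1) by (apply up_nat; nra).
  set (A := fun m : nat => x <= INR m <= (1 + eps) * x /\
        (1 <= m)%nat /\ f (n * m)%nat >= (1 - eps) * f n * f m) in Hc.
  set (C := fun k : nat => (1 <= k)%nat /\ B k).
  assert (Hcnt : (count_le A N <= count_le C N + count_le C (n * N))%nat).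
  { eapply Nat.le_trans.
    - apply (count_mono A (fun m => C m \/ C (n * m)%nat)).
      intros m [Hm1 [Hm2 Hm3]].
      destruct (classic (B m)) as [HB|HB]; [left; split; auto|].
      destruct (classic (B (n * m)%nat)) as [HB'|HB'].
      + right; split; auto. nia.
      + exfalso; apply Hno; exists m; repeat split; try tauto; try lra;
        unfold B in HB, HB'; apply Rnot_ge_lt; auto.
    - eapply Nat.le_trans; [apply count_or|].
      apply Nat.add_le_mono_l. apply (count_mul C n N Hn). }
  assert (HNN0 : (N >= N0)%nat).
  { assert (INR N0 < INR N) by nra. apply INR_lt in H. lia. }
  pose proof (HN0 N HNN0) as E1.
  assert (E2 := HN0 (n * N)%nat ltac:(nia)).
  fold B C in E1, E2.
  apply le_INR in Hcnt. rewrite plus_INR in Hcnt.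
  rewrite mult_INR in E2.
  assert (Hb : INR N <= (2 + eps) * x) by lra.
  assert (INR (count_le A N) <= eta * (1 + INR n) * INR N) by nra.
  assert (eta * (1 + INR n) * INR N <= eta * (1 + INR n) * ((2 + eps) * x)).
  { apply Rmult_le_compat_l; [|exact Hb]. nra. }
  assert (eta * (1 + INR n) * ((2 + eps) * x) = delta / 2 * x).
  { rewrite <- Heta2. ring. }
  nra.
Qed.

Lemma bernoulli h n : 0 <= h -> 1 + INR n * h <= (1 + h) ^ n.
Proof.
  intros Hh. induction n as [|n IH]; [simpl; lra|].
  rewrite S_INR. change ((1+h)^(S n)) with ((1+h)*(1+h)^n). assert (0 <= INR n) by apply pos_INR.
  assert (1 <= (1 + h) ^ n) by (apply pow_R1_Rle; lra). nra.
Qed.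

Lemma Reg (g : R -> R) (hg_pos : forall x, 0 < x -> 0 < g x)
  (hreg : nondecreasing_pos g \/ log_unif_cont g) tau :
  0 < tau < 1 -> exists e0, 0 < e0 <= 1 /\ forall eps, 0 < eps <= e0 ->
  forall y m, 0 < y -> y <= m <= (1 + eps) * y ->
  g y <= g m / (1 - tau) /\ (1 - tau) * g m <= g ((1 + eps) * y).
Proof.
  intros Ht. destruct hreg as [Hnd|Hlu].
  - exists 1. split; [lra|]. intros eps He y m Hy Hm.
    assert (Hgm : 0 < g m) by (apply hg_pos; lra).
    assert (g y <= g m) by (apply Hnd; lra).
    assert (g m <= g ((1 + eps) * y)) by (apply Hnd; lra).
    split.
    + apply Rle_trans with (g m); auto.
      apply Rmult_le_reg_r with (1 - tau); [lra|].
      unfold Rdiv. rewrite Rmult_assoc, Rinv_l by lra. nra.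
    + nra.
  - destruct (Hlu tau ltac:(lra)) as [d [Hd Hc]].
    exists (Rmin 1 (d / 2)). split.
    { split; [apply Rmin_glb_lt; lra|apply Rmin_l]. }
    intros eps He y m Hy Hm.
    assert (Hed : eps < d) by (pose proof (Rmin_r 1 (d/2)); lra).
    assert (Hgm : 0 < g m) by (apply hg_pos; lra).
    assert (Hgy : 0 < g y) by (apply hg_pos; lra).
    assert (Hm0 : 0 < m) by lra.
    assert (Hz : 0 < (1 + eps) * y) by nra.
    assert (Hgz : 0 < g ((1 + eps) * y)) by (apply hg_pos; lra).
    split.
    + assert (Hr : Rabs (y / m - 1) < d).
      { apply Rabs_def1.
        - apply Rmult_lt_reg_r with m; [lra|].
          unfold Rdiv. rewrite Rmult_minus_distr_r, Rmult_assoc, Rinv_l by lra. nra.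
        - apply Rmult_lt_reg_r with m; [lra|].
          unfold Rdiv. rewrite Rmult_minus_distr_r, Rmult_assoc, Rinv_l by lra. nra. }
      pose proof (Hc y m Hy Hm0 Hr) as Hg. apply Rabs_def2 in Hg.
      assert (Hq : g y < (1 + tau) * g m).
      { destruct Hg as [Hg _].
        assert (g y / g m * g m = g y) by (field; lra). nra. }
      apply Rmult_le_reg_r with (1 - tau); [lra|].
      unfold Rdiv. rewrite Rmult_assoc, Rinv_l by lra. nra.
    + assert (Hr : Rabs (m / ((1 + eps) * y) - 1) < d).
      { apply Rabs_def1.
        - apply Rmult_lt_reg_r with ((1 + eps) * y); [lra|].
          unfold Rdiv. rewrite Rmult_minus_distr_r, Rmult_assoc, Rinv_l by lra. nra.
        - apply Rmult_lt_reg_r with ((1 + eps) * y); [lra|].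
          unfold Rdiv. rewrite Rmult_minus_distr_r, Rmult_assoc, Rinv_l by lra. nra. }
      pose proof (Hc m ((1 + eps) * y) Hm0 Hz Hr) as Hg. apply Rabs_def2 in Hg.
      destruct Hg as [Hg _].
      assert (g m / g ((1 + eps) * y) * g ((1 + eps) * y) = g m) by (field; lra).
      nra.
Qed.

Lemma LB (g : R -> R) (hg_pos : forall x, 0 < x -> 0 < g x)
  (hreg : nondecreasing_pos g \/ log_unif_cont g) Y1 rho :
  0 < Y1 -> exists a, 0 < a /\ forall y, Y1 <= y <= rho * Y1 -> a <= g y.
Proof.
  intros HY.
  destruct (Reg g hg_pos hreg (1/2) ltac:(lra)) as [e0 [He0 HR]].
  assert (Hind : forall j : nat, forall m, Y1 <= m <= (1 + e0) ^ j * Y1 ->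
            g Y1 / 2 ^ j <= g m).
  { induction j as [|j IH]; intros m Hm.
    - simpl in *. assert (m = Y1) by lra. subst. lra.
    - assert (Hp : 0 < 2 ^ j) by (apply pow_lt; lra).
      assert (HgY : 0 < g Y1) by (apply hg_pos; lra).
      assert (Hgm : 0 < g m) by (apply hg_pos; lra).
      assert (Hpj : g Y1 / 2 ^ S j = g Y1 / 2 ^ j / 2) by (simpl; field; lra).
      rewrite Hpj.
      assert (0 < g Y1 / 2 ^ j) by (apply Rdiv_lt_0_compat; lra).
      destruct (Rle_dec m ((1 + e0) ^ j * Y1)) as [Hle|Hgt].
      + pose proof (IH m ltac:(lra)). lra.
      + set (q := m / (1 + e0)).
        assert (Hq : q * (1 + e0) = m) by (unfold q; field; lra).
        assert (Hqb : q <= (1 + e0) ^ j * Y1).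
        { simpl in Hm. nra. }
        destruct (Rle_dec Y1 q) as [HYq|HYq].
        * pose proof (IH q ltac:(lra)).
          destruct (HR e0 ltac:(lra) q m ltac:(lra) ltac:(nra)) as [H1 _].
          assert (g m / (1 - 1/2) = 2 * g m) by (field; lra). lra.
        * pose proof (IH Y1 ltac:(split; [lra|]; assert (1 <= (1+e0)^j) by (apply pow_R1_Rle; lra); nra)).
          destruct (HR e0 ltac:(lra) Y1 m ltac:(lra) ltac:(nra)) as [H1 _].
          assert (g m / (1 - 1/2) = 2 * g m) by (field; lra). lra. }
  destruct (INR_archimed e0 rho ltac:(lra)) as [J HJ].
  exists (g Y1 / 2 ^ J). split.
  { apply Rdiv_lt_0_compat; [apply hg_pos; lra| apply pow_lt; lra]. }
  intros y Hy. apply Hind.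
  pose proof (bernoulli e0 J ltac:(lra)). nra.
Qed.

Lemma ln_le' x y : 0 < x -> x <= y -> ln x <= ln y.
Proof.
  intros Hx Hxy. destruct (Rle_lt_or_eq_dec _ _ Hxy) as [H|H].
  - left; apply ln_increasing; auto.
  - subst; lra.
Qed.

Lemma div_gt b a L : 0 < L -> b * L < a -> b < a / L.
Proof.
  intros HL H. apply Rmult_lt_reg_r with L; auto.
  unfold Rdiv. rewrite Rmult_assoc, Rinv_l by lra. lra.
Qed.

Lemma div_lt b a L : 0 < L -> a < b * L -> a / L < b.
Proof.
  intros HL H. apply Rmult_lt_reg_r with L; auto.
  unfold Rdiv. rewrite Rmult_assoc, Rinv_l by lra. lra.
Qed.

Lemma Iter (g : R -> R) (hg_pos : forall x, 0 < x -> 0 < g x) rho c Y a :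
  1 < rho -> 0 < c -> 0 < Y -> 0 < a ->
  (forall y, y >= Y -> c * g y <= g (rho * y)) ->
  (forall y, Y <= y <= rho * Y -> a <= g y) ->
  exists C, forall z, z >= Y -> ln (g z) >= (ln c / ln rho) * ln z - C.
Proof.
  intros Hr Hc HY Ha Hstep Hbase.
  assert (Hind : forall k : nat, forall z, rho ^ k * Y <= z <= rho ^ (S k) * Y ->
     c ^ k * a <= g z).
  { induction k as [|k IH]; intros z Hz.
    - simpl in *. rewrite Rmult_1_r in Hz. rewrite Rmult_1_l. apply Hbase. lra.
    - assert (Hpk : 1 <= rho ^ k) by (apply pow_R1_Rle; lra).
      set (w := z / rho).
      assert (Hw : rho * w = z) by (unfold w; field; lra).
      assert (Hwz : rho ^ k * Y <= w <= rho ^ S k * Y).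
      { change (rho ^ S k) with (rho * rho ^ k) in *.
        change (rho ^ S (S k)) with (rho * (rho * rho ^ k)) in Hz. nra. }
      pose proof (IH w Hwz).
      assert (w >= Y).
      { destruct Hwz as [Hw1 _].
        assert (0 <= (rho^k - 1)*Y) by (apply Rmult_le_pos; lra). lra. }
      pose proof (Hstep w H0). rewrite Hw in H1.
      change (c ^ S k) with (c * c ^ k). nra. }
  assert (Hex : forall N : nat, forall z, Y <= z <= rho ^ N * Y ->
     exists k : nat, rho ^ k * Y <= z <= rho ^ (S k) * Y).
  { induction N as [|N IH]; intros z Hz.
    - exists 0%nat. simpl in *. split; [lra|]. assert (0 <= (rho - 1) * Y) by (apply Rmult_le_pos; lra). lra.
    - destruct (Rle_dec z (rho ^ N * Y)) as [H|H].
      + apply IH; lra.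
      + exists N. lra. }
  assert (Hlr : 0 < ln rho) by (rewrite <- ln_1; apply ln_increasing; lra).
  set (lam := ln c / ln rho).
  exists (Rabs lam * (ln rho + Rabs (ln Y)) - ln a).
  intros z Hz.
  destruct (INR_archimed (rho - 1) (z / Y) ltac:(lra)) as [N HN].
  pose proof (bernoulli (rho - 1) N ltac:(lra)) as HB.
  replace (1 + (rho - 1)) with rho in HB by ring.
  assert (z <= rho ^ N * Y).
  { assert (z / Y * Y = z) by (field; lra). nra. }
  destruct (Hex N z ltac:(lra)) as [k Hk].
  pose proof (Hind k z Hk) as Hg.
  assert (Hck : 0 < c ^ k) by (apply pow_lt; auto).
  assert (Hpk : 0 < rho ^ k) by (apply pow_lt; lra).
  apply Rle_ge.
  assert (Hlg : ln (c ^ k * a) <= ln (g z)) by (apply ln_le'; [nra|auto]).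
  rewrite ln_mult, ln_pow in Hlg by auto.
  assert (Hl1 : ln (rho ^ k * Y) <= ln z) by (apply ln_le'; [nra|lra]).
  assert (Hl2 : ln z <= ln (rho ^ S k * Y)) by (apply ln_le'; [nra|lra]).
  rewrite ln_mult, ln_pow in Hl1, Hl2 by (try apply pow_lt; lra).
  rewrite S_INR in Hl2.
  set (t := INR k * ln rho - ln z).
  assert (Ht : Rabs t <= ln rho + Rabs (ln Y)).
  { apply Rabs_le. pose proof (Rabs_pos (ln Y)) as A1.
    pose proof (Rle_abs (ln Y)) as A2. pose proof (Rle_abs (- ln Y)) as A3.
    rewrite Rabs_Ropp in A3. unfold t. split; lra. }
  assert (Heq : INR k * ln c = lam * ln z + lam * t).
  { unfold t, lam. field. lra. }
  assert (Hlt : - (Rabs lam * (ln rho + Rabs (ln Y))) <= lam * t).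
  { assert (Rabs (lam * t) <= Rabs lam * (ln rho + Rabs (ln Y))).
    { rewrite Rabs_mult. apply Rmult_le_compat_l; auto. apply Rabs_pos. }
    pose proof (Rle_abs (- (lam * t))) as A4. rewrite Rabs_Ropp in A4. lra. }
  lra.
Qed.

Section S.
Variables (f : nat -> R) (g : R -> R)
  (hf_nonneg : forall n : nat, 0 <= f n)
  (hf_wsm : weakly_supermult f)
  (hg_pos : forall x : R, 0 < x -> 0 < g x)
  (hfg : normal_order f g)
  (hg_reg : nondecreasing_pos g \/ log_unif_cont g).

Lemma ln2_pos : 0 < ln 2.
Proof. pose proof ln_lt_2. lra. Qed.

Lemma good_m : exists X, 0 < X /\ forall y, y > X -> exists m : nat, (2 <= m)%nat /\
   y <= INR m <= 2 * y /\ 0 < f m /\ g (INR m) < 2 * f m /\ g y <= 2 * g (INR m).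
Proof.
  destruct (Reg g hg_pos hg_reg (1/2) ltac:(lra)) as [e0 [He0 HR]].
  destruct (L1 f g hfg hf_wsm 1 e0 (1/2) ltac:(lia) ltac:(lra) ltac:(lra)) as [X [HX HL]].
  exists (Rmax X 2). split; [apply Rlt_le_trans with 2; [lra|apply Rmax_r]|].
  intros y Hy.
  assert (HyX : y > X) by (eapply Rle_lt_trans; [apply Rmax_l|exact Hy]).
  assert (Hy2 : y > 2) by (eapply Rle_lt_trans; [apply Rmax_r|exact Hy]).
  destruct (HL y HyX) as [m [Hm1 [Hm2 [_ [Hm4 _]]]]].
  exists m. 
  assert (Hgm : 0 < g (INR m)) by (apply hg_pos; lra).
  apply Rabs_def2 in Hm4.
  destruct (HR e0 ltac:(lra) y (INR m) ltac:(lra) ltac:(lra)) as [H1 _].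
  assert (g (INR m) / (1 - 1/2) = 2 * g (INR m)) by (field; lra).
  repeat split; try lra.
  - assert (INR 2 < INR m) by (simpl; lra). apply INR_lt in H0. lia.
  - nra.
Qed.

Lemma S_nonempty : exists s, ratio_set f s.
Proof.
  destruct good_m as [X [HX H]].
  destruct (H (X + 1) ltac:(lra)) as [m [Hm [_ [Hf _]]]].
  exists (ln (f m) / ln (INR m)). exists m. auto.
Qed.

Lemma Upper r : (forall s, ratio_set f s -> s <= r) -> forall e, 0 < e ->
  exists Y, forall y, y > Y -> ln (g y) / ln y < r + e.
Proof.
  intros Hr e He.
  destruct good_m as [X [HX H]].
  pose proof ln2_pos as Hl2.
  set (K := 2 * ln 2 + Rabs r * ln 2).
  exists (Rmax X (exp (K / e))).
  intros y Hy.
  assert (HyX : y > X) by (eapply Rle_lt_trans; [apply Rmax_l|exact Hy]).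
  assert (HyE : y > exp (K / e)) by (eapply Rle_lt_trans; [apply Rmax_r|exact Hy]).
  assert (Hy0 : 0 < y) by lra.
  destruct (H y HyX) as [m [Hm [Hm2 [Hf [Hgm Hgy]]]]].
  assert (Hm0 : 0 < INR m) by lra.
  assert (Hgm0 : 0 < g (INR m)) by (apply hg_pos; lra).
  assert (Hs := Hr _ (ex_intro _ m (conj Hm (conj Hf eq_refl)))).
  assert (Hlm : 0 < ln (INR m)).
  { rewrite <- ln_1. apply ln_increasing; [lra|].
    replace 1 with (INR 1) by reflexivity. apply lt_INR. lia. }
  assert (Hfm : ln (f m) <= r * ln (INR m)).
  { assert (ln (f m) / ln (INR m) * ln (INR m) = ln (f m)) by (field; lra). nra. }
  assert (Hy1 : ln (g y) <= ln 2 + ln (g (INR m))).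
  { rewrite <- ln_mult by lra. apply ln_le'; [apply hg_pos; lra|lra]. }
  assert (Hy2 : ln (g (INR m)) <= ln 2 + ln (f m)).
  { rewrite <- ln_mult by lra. apply ln_le'; lra. }
  assert (Hm3 : ln y <= ln (INR m)) by (apply ln_le'; lra).
  assert (Hm4 : ln (INR m) <= ln 2 + ln y).
  { rewrite <- ln_mult by lra. apply ln_le'; lra. }
  assert (Hrr : r * (ln (INR m) - ln y) <= Rabs r * ln 2).
  { apply Rle_trans with (Rabs r * (ln (INR m) - ln y)).
    - apply Rmult_le_compat_r; [lra|apply Rle_abs].
    - apply Rmult_le_compat_l; [apply Rabs_pos|lra]. }
  assert (Hly : K / e < ln y).
  { rewrite <- (ln_exp (K / e)). apply ln_increasing; [apply exp_pos|lra]. }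
  assert (HK : K < e * ln y).
  { assert (K / e * e = K) by (field; lra). nra. }
  assert (0 < ln y) by (pose proof (Rabs_pos r); unfold K in *; nra).
  apply div_lt; auto. unfold K in *. nra.
Qed.

Lemma Lower n e : (2 <= n)%nat -> 0 < f n -> 0 < e ->
  exists Y, forall y, y > Y -> ln (g y) / ln y > ln (f n) / ln (INR n) - e.
Proof.
  intros Hn Hfn He.
  assert (Hn2 : 2 <= INR n) by (replace 2 with (INR 2) by reflexivity; apply le_INR; auto).
  assert (Hln : 0 < ln (INR n)).
  { rewrite <- ln_1. apply ln_increasing; lra. }
  set (s := ln (f n) / ln (INR n)).
  assert (Hsf : ln (f n) = s * ln (INR n)) by (unfold s; field; lra).
  set (th := exp (- (e / 4 * ln (INR n)))).
  assert (Hth0 : 0 < th) by apply exp_pos.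
  assert (Hth1 : th < 1).
  { unfold th. rewrite <- exp_0. apply exp_increasing. nra. }
  set (tau := (1 - th) / 4).
  destruct (Reg g hg_pos hg_reg tau ltac:(unfold tau; lra)) as [e0 [He0 HR]].
  set (B := e / 4 * ln (INR n) / (Rabs s + e + 1)).
  assert (HB : 0 < B).
  { unfold B. apply Rdiv_lt_0_compat; [nra|pose proof (Rabs_pos s); lra]. }
  set (eps := Rmin e0 (Rmin tau B)).
  assert (Heps0 : 0 < eps).
  { unfold eps. apply Rmin_glb_lt; [lra|apply Rmin_glb_lt; unfold tau; lra]. }
  assert (Heps1 : eps <= e0) by apply Rmin_l.
  assert (Heps2 : eps <= tau) by (unfold eps; eapply Rle_trans; [apply Rmin_r|apply Rmin_l]).
  assert (Heps3 : eps <= B) by (unfold eps; eapply Rle_trans; [apply Rmin_r|apply Rmin_r]).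
  set (eta := (1 - th) / 8).
  destruct (L1 f g hfg hf_wsm n eps eta ltac:(lia) Heps0 ltac:(unfold eta; lra)) as [X [HX HL]].
  set (kap := (1 - tau) ^ 2 * (1 - eps) * (1 - eta) / (1 + eta)).
  set (c := kap * f n).
  set (rho := (1 + eps) * INR n).
  assert (Hq : (1 - eta) / (1 + eta) >= 1 - 2 * eta).
  { apply Rle_ge. apply Rmult_le_reg_r with (1 + eta); [unfold eta; lra|].
    unfold Rdiv. rewrite Rmult_assoc, Rinv_l by (unfold eta; lra).
    assert (0 <= eta * eta) by nra. nra. }
  assert (Hq0 : 0 < (1 - eta) / (1 + eta)) by (apply Rdiv_lt_0_compat; unfold eta; lra).
  assert (Hkap : th <= kap).
  { set (u := (1 - th) / 4).
    assert (H1 : 1 - u <= 1 - tau) by (unfold u, tau; lra).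
    assert (H2 : 1 - u <= 1 - eps) by (unfold u; unfold tau in Heps2; lra).
    assert (H3 : 1 - u <= (1 - eta) / (1 + eta)) by (unfold u, eta in *; lra).
    assert (Hu : 0 < 1 - u) by (unfold u; lra).
    assert (H4 : (1 - u) ^ 4 <= kap).
    { unfold kap. unfold Rdiv. rewrite Rmult_assoc.
      change ((1 - eta) * / (1 + eta)) with ((1 - eta) / (1 + eta)).
      simpl. 
      assert (P2 : 0 <= (1-u)*(1-u)) by (apply Rmult_le_pos; lra).
      assert (P3 : 0 <= (1-u)*(1-u)*(1-u)) by (apply Rmult_le_pos; lra).
      assert (Q2 : (1-u)*(1-u) <= (1-tau)*(1-tau)) by (apply Rmult_le_compat; lra).
      assert (Q3 : (1-u)*(1-u)*(1-u) <= (1-tau)*(1-tau)*(1-eps)) by (apply Rmult_le_compat; lra).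
      assert (Q4 : (1-u)*(1-u)*(1-u)*(1-u) <= (1-tau)*(1-tau)*(1-eps)*((1 - eta) / (1 + eta)))
        by (apply Rmult_le_compat; lra).
      nra. }
    assert (H5 : 1 - 4 * u <= (1 - u) ^ 4).
    { assert (0 <= u) by (unfold u; lra). assert (u <= 1/4) by (unfold u; lra).
      assert (W1 : 1 - 2 * u <= (1 - u) * (1 - u)) by nra.
      assert (W2 : (1 - 2 * u) * (1 - 2 * u) <= ((1 - u) * (1 - u)) * ((1 - u) * (1 - u)))
        by (apply Rmult_le_compat; lra).
      simpl. nra. }
    assert (1 - 4 * u = th) by (unfold u; field). lra. }
  assert (Hkap0 : 0 < kap) by lra.
  assert (Hc0 : 0 < c) by (unfold c; nra).
  assert (Hrho : 1 < rho) by (unfold rho; nra).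
  set (Y0 := X + 1).
  assert (Hstep : forall y, y >= Y0 -> c * g y <= g (rho * y)).
  { intros y Hy.
    destruct (HL y ltac:(unfold Y0 in Hy; lra)) as [m [Hm1 [Hm2 [Hm3 [Hm4 Hm5]]]]].
    assert (Hy0 : 0 < y) by (unfold Y0 in Hy; lra).
    destruct (HR eps ltac:(lra) y (INR m) Hy0 Hm2) as [A1 _].
    rewrite mult_INR in Hm5.
    destruct (HR eps ltac:(lra) (INR n * y) (INR n * INR m) ltac:(nra) ltac:(split; nra))
      as [_ A2].
    replace ((1 + eps) * (INR n * y)) with (rho * y) in A2 by (unfold rho; ring).
    apply Rabs_def2 in Hm4. apply Rabs_def2 in Hm5.
    assert (Hgm : 0 < g (INR m)) by (apply hg_pos; lra).
    assert (Hgnm : 0 < g (INR n * INR m)) by (apply hg_pos; nra).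
    assert (Hgy : 0 < g y) by (apply hg_pos; lra).
    assert (Htau : 0 < 1 - tau) by (unfold tau; lra).
    assert (B1 : (1 - tau) * g y <= g (INR m)).
    { assert (g (INR m) / (1 - tau) * (1 - tau) = g (INR m)) by (field; lra). nra. }
    assert (B2 : (1 - eta) * g (INR m) <= f m) by lra.
    assert (B3 : f (n * m)%nat <= (1 + eta) * g (INR n * INR m)) by lra.
    assert (Hfnm : (1 - eps) * f n * f m <= f (n * m)%nat) by lra.
    assert (Heps' : 0 < 1 - eps) by (unfold tau in Heps2; lra).
    assert (Heta' : 0 < 1 - eta) by (unfold eta; lra).
    assert (C1 : (1 - eps) * f n * ((1 - eta) * ((1 - tau) * g y)) <= f (n * m)%nat).
    { eapply Rle_trans; [|exact Hfnm].
      apply Rmult_le_compat_l; [nra|]. eapply Rle_trans; [|exact B2].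
      apply Rmult_le_compat_l; lra. }
    assert (C2 : c * g y = (1 - tau) * ((1 - eps) * f n * ((1 - eta) * ((1 - tau) * g y))) / (1 + eta)).
    { unfold c, kap. field. unfold eta; lra. }
    rewrite C2. apply Rle_trans with ((1 - tau) * g (INR n * INR m)); [|exact A2].
    apply Rmult_le_reg_r with (1 + eta); [unfold eta; lra|].
    unfold Rdiv. rewrite Rmult_assoc, Rinv_l by (unfold eta; lra).
    nra. }
  destruct (LB g hg_pos hg_reg Y0 rho ltac:(unfold Y0; lra)) as [a [Ha Hbase]].
  destruct (Iter g hg_pos rho c Y0 a Hrho Hc0 ltac:(unfold Y0; lra) Ha Hstep Hbase) as [C HC].
  set (lam := ln c / ln rho).
  assert (Hlr : 0 < ln rho) by (rewrite <- ln_1; apply ln_increasing; lra).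
  assert (Hlam : s - e / 2 <= lam).
  { unfold lam. apply Rmult_le_reg_r with (ln rho); auto.
    unfold Rdiv. rewrite Rmult_assoc, Rinv_l by lra. rewrite Rmult_1_r.
    unfold c, rho. rewrite !ln_mult by lra. rewrite Hsf.
    assert (Hk : - (e / 4 * ln (INR n)) <= ln kap).
    { rewrite <- (ln_exp (- (e / 4 * ln (INR n)))). apply ln_le'; [apply exp_pos|]. exact Hkap. }
    assert (Hl1 : ln (1 + eps) <= eps).
    { rewrite <- (ln_exp eps) at 2. apply ln_le'; [lra|].
      pose proof (exp_ineq1 eps ltac:(lra)). lra. }
    assert (Hl0 : 0 < ln (1 + eps)) by (rewrite <- ln_1; apply ln_increasing; lra).
    assert (HsB : (s - e / 2) * ln (1 + eps) <= e / 4 * ln (INR n)).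
    { apply Rle_trans with (Rabs (s - e / 2) * ln (1 + eps)).
      { apply Rmult_le_compat_r; [lra|apply Rle_abs]. }
      apply Rle_trans with ((Rabs s + e + 1) * eps).
      { apply Rmult_le_compat; [apply Rabs_pos|lra| |lra].
        pose proof (Rabs_triang s (- (e/2))) as HT. rewrite Rabs_Ropp in HT.
        rewrite (Rabs_right (e/2)) in HT by lra. unfold Rminus. lra. }
      assert (B * (Rabs s + e + 1) = e / 4 * ln (INR n)).
      { unfold B. field. pose proof (Rabs_pos s). lra. }
      pose proof (Rabs_pos s). nra. }
    nra. }
  set (K := 2 * Rabs C / e + 1).
  exists (Rmax Y0 (exp K)).
  intros z Hz.
  assert (HzY : z >= Y0) by (apply Rle_ge; left; eapply Rle_lt_trans; [apply Rmax_l|exact Hz]).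
  assert (HzE : z > exp K) by (eapply Rle_lt_trans; [apply Rmax_r|exact Hz]).
  assert (Hlz : K < ln z).
  { rewrite <- (ln_exp K). apply ln_increasing; [apply exp_pos|lra]. }
  pose proof (Rabs_pos C). pose proof (Rle_abs C).
  assert (HK1 : 2 * Rabs C < e * (ln z - 1)).
  { assert (2 * Rabs C / e * e = 2 * Rabs C) by (field; lra). unfold K in Hlz. nra. }
  assert (Hlz0 : 0 < ln z) by (unfold K in Hlz; assert (0 <= 2 * Rabs C / e) by (apply Rmult_le_pos; [lra|left; apply Rinv_0_lt_compat; lra]); lra).
  pose proof (HC z HzY). fold lam in H1.
  apply Rlt_gt. apply div_gt; auto. fold s. nra.
Qed.

End S.

Theorem mainTheorem3 (f : nat -> R) (g : R -> R)
  (hf_nonneg : forall n : nat, 0 <= f n)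
  (hf_wsm : weakly_supermult f)
  (hg_pos : forall x : R, 0 < x -> 0 < g x)
  (hfg : normal_order f g)
  (hg_reg : nondecreasing_pos g \/ log_unif_cont g) :
  (exists L : R, is_lub (ratio_set f) L /\
      tends_to_at_infty (fun y => ln (g y) / ln y) L)
  \/ (~ bound (ratio_set f) /\ tends_to_infty (fun y => ln (g y) / ln y)).
Proof.
  pose proof (Upper f g hf_wsm hg_pos hfg hg_reg) as HU.
  pose proof (Lower f g hf_wsm hg_pos hfg hg_reg) as HL.
  destruct (classic (bound (ratio_set f))) as [Hb|Hnb].
  - left. destruct (completeness _ Hb (S_nonempty f g hf_wsm hg_pos hfg hg_reg)) as [L HLub].
    exists L. split; auto.
    intros e He.
    destruct (HU L (fun s Hs => proj1 HLub s Hs) e He) as [Y1 HY1].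
    assert (Hex : exists s, ratio_set f s /\ s > L - e / 2).
    { apply NNPP; intro Hno.
      assert (is_upper_bound (ratio_set f) (L - e / 2)).
      { intros s Hs. apply Rnot_gt_le. intro. apply Hno. exists s; auto. }
      pose proof (proj2 HLub _ H). lra. }
    destruct Hex as [s [[n [Hn [Hfn Hs]]] Hsl]].
    destruct (HL n (e / 2) Hn Hfn ltac:(lra)) as [Y2 HY2].
    exists (Rmax Y1 Y2). intros y Hy.
    assert (y > Y1) by (eapply Rle_lt_trans; [apply Rmax_l|exact Hy]).
    assert (y > Y2) by (eapply Rle_lt_trans; [apply Rmax_r|exact Hy]).
    specialize (HY1 y H). specialize (HY2 y H0). rewrite <- Hs in HY2.
    apply Rabs_def1; lra.
  - right. split; auto. intros M.
    assert (Hex : exists s, ratio_set f s /\ s > M + 1).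
    { apply NNPP; intro Hno. apply Hnb. exists (M + 1).
      intros s Hs. apply Rnot_gt_le. intro. apply Hno. exists s; auto. }
    destruct Hex as [s [[n [Hn [Hfn Hs]]] Hsl]].
    destruct (HL n 1 Hn Hfn ltac:(lra)) as [Y HY].
    exists Y. intros y Hy. specialize (HY y Hy). rewrite <- Hs in HY. lra.
Qed.
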